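(* Let $X$ be a compact connected metric space with infinitely many points, let $\psi\colon X\to X$ be a minimal homeomorphism, and let $S$ be an infinite set of positive integers. Then for every $\varepsilon>0$ there exist $n\in S$, an $\varepsilon$-dense set $\{x_1,\dots,x_n\}\subset X$ of $n$ distinct points, and a permutation $s$ of $\{1,2,\dots,n\}$ such that $${\rm dist}(x_j,\psi(x_{s(j)}))<\varepsilon,\qquad j=1,2,\dots,n.$$
   Context: A homeomorphism is minimal if $X$ has no closed invariant subsets other than $\emptyset$ and $X$. *)

(* Defs.v *)
From HB Require Import structures.
From mathcomp Require Import all_boot all_order all_algebra.
From mathcomp Require Import all_classical all_reals all_analysis.
From mathcomp Require Import fingroup perm.
Set Implicit Arguments. Unset Strict Implicit. Unset Printing Implicit Defensive.
Import Order.TTheory GRing.Theory Num.Theory.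
Local Open Scope classical_set_scope.
Local Open Scope ring_scope.

Definition homeomorphism (T : topologicalType) (f : T -> T) : Prop :=
  exists g : T -> T,
    [/\ cancel f g, cancel g f, continuous f & continuous g].

Definition invariant_set (T : Type) (f : T -> T) (A : set T) : Prop :=
  f @` A = A.

Definition minimal_homeo (T : topologicalType) (f : T -> T) : Prop :=
  homeomorphism f /\
  forall A : set T, closed A -> invariant_set f A -> A = set0 \/ A = setT.

(* Main.v *)
Require Import Defs.
From HB Require Import structures.
From mathcomp Require Import all_boot all_order all_algebra.
From mathcomp Require Import all_classical all_reals all_analysis.
From mathcomp Require Import fingroup perm.
From mathcomp Require Import lra zify.
Import Order.TTheory GRing.Theory Num.Theory.
Local Open Scope classical_set_scope.
Local Open Scope ring_scope.
Lemma cont_ball (R : realType) (X : metricType R) (f : X -> X) :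
  continuous f -> forall x e, 0 < e ->
  exists2 r, 0 < r & forall y, mdist x y < r -> mdist (f x) (f y) < e.
Proof.
move=> fc x e e0.
have := fc x => /metricType_numDomainType.cvgrPdist_lt /(_ e e0).
rewrite -metricType_numDomainType.filter_from_mdist_nbhs => -[r r0 H].
by exists r => // y /H.
Qed.

Lemma open_metric (R : realType) (X : metricType R) (A : set X) :
  (forall y, A y -> exists2 r, 0 < r & forall w, mdist y w < r -> A w) -> open A.
Proof.
move=> H; rewrite openE => y /H [r r0 Hr].
rewrite /interior -metricType_numDomainType.filter_from_mdist_nbhs.
by exists r.
Qed.

Lemma cluster_seq (R : realType) (X : metricType R) :
  compact [set: X] -> forall u : nat -> X, exists y, forall N r, 0 < r ->
  exists2 k, (N <= k)%N & mdist y (u k) < r.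
Proof.
move=> cX u.
have PF : ProperFilter (u @ \oo) := fmap_proper_filter u eventually_filter.
have [y [_ cy]] := cX _ PF (filterT).
exists y => N r r0.
have [w [[k /= Nk <-] Hw]] := cy (u @` [set k | (N <= k)%N]) (ball y r)
  (ltac:(by exists N => // k /= Nk; exists k)) (nbhsx_ballx y r r0).
by exists k => //; move: Hw; rewrite ballEmdist.
Qed.

Lemma nonisolated (R : realType) (X : metricType R) :
  connected [set: X] -> infinite_set [set: X] ->
  forall (p : X) r, 0 < r -> exists q, q != p /\ mdist p q < r.
Proof.
move=> cX iX p r r0; apply: contrapT => Hn.
have H1 : forall q, mdist p q < r -> q = p.
  move=> q pq; apply: contrapT => /eqP qp; apply: Hn; by exists q.
have op : open [set p].
  apply: open_metric => y -> ; exists r => // w /H1 ->; done.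
have cp : closed [set p].
  apply: accessible_closed_set1; apply: hausdorff_accessible; exact: metric_hausdorff.
have : [set p] = [set: X].
  apply: cX; first by exists p.
  - by exists [set p] => //; rewrite setTI.
  - by exists [set p] => //; rewrite setTI.
move=> E; apply: iX; rewrite -E; exact: finite_set1.
Qed.

Lemma avoid_seq (R : realType) (X : metricType R) :
  connected [set: X] -> infinite_set [set: X] ->
  forall (p : X) (s : seq X) r, 0 < r ->
  exists q, [/\ q != p, q \notin s & mdist p q < r].
Proof.
move=> cX iX p s; elim: s => [|a s IH] r r0.
  have [q [qp Hq]] := @nonisolated _ _ cX iX p r r0; by exists q.
have [ap|ap] := eqVneq a p.
  have [q [qp qs Hq]] := IH r r0.
  by exists q; split => //; rewrite inE negb_or qs andbT ap.
have r1 : 0 < Num.min r (mdist p a) by rewrite lt_min r0 mdist_gt0 eq_sym ap.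
have [q [qp qs Hq]] := IH _ r1.
exists q; split => //; last by apply: lt_le_trans Hq _; rewrite ge_min lexx.
rewrite inE negb_or qs andbT; apply/eqP => qa; move: Hq.
by rewrite qa lt_min ltxx andbF.
Qed.

Lemma perturb (R : realType) (X : metricType R) :
  connected [set: X] -> infinite_set [set: X] ->
  forall (c : nat -> X) (r : nat -> R), (forall i, 0 < r i) -> forall n,
  exists f : nat -> X, (forall i, (i < n)%N -> mdist (c i) (f i) < r i) /\
    (forall i j, (i < n)%N -> (j < n)%N -> f i = f j -> i = j).
Proof.
move=> cX iX c r r0; elim=> [|n [f [Hf If]]].
  by exists c; split.
have [q [_ qs Hq]] := @avoid_seq _ _ cX iX (c n) [seq f i | i <- iota 0 n] (r n) (r0 n).
exists (fun i => if i == n then q else f i); split.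
  move=> i; rewrite ltnS leq_eqVlt; case: eqP => [->|_ /= ] //; exact: Hf.
have qf : forall i, (i < n)%N -> q <> f i.
  move=> i ilt qfi; move/negP: qs; apply; apply/mapP; exists i => //.
  by rewrite mem_iota.
move=> i j; rewrite !ltnS => ilt jlt.
case: (eqVneq i n) => [ei|ni]; case: (eqVneq j n) => [ej|nj].
- by rewrite ei ej.
- have jn : (j < n)%N by rewrite ltn_neqAle nj jlt.
  by move=> /(qf j jn).
- have iN : (i < n)%N by rewrite ltn_neqAle ni ilt.
  by move=> /esym /(qf i iN).
- have jn : (j < n)%N by rewrite ltn_neqAle nj jlt.
  have iN : (i < n)%N by rewrite ltn_neqAle ni ilt.
  exact: If.
Qed.

Lemma fwd_dense (R : realType) (X : metricType R) (psi : X -> X) :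
  compact [set: X] -> minimal_homeo psi ->
  forall x y N r, 0 < r -> exists2 k, (N <= k)%N & mdist y (iter k psi x) < r.
Proof.
move=> cX [[g [psig gpsi cpsi cg]] mini] x.
pose A := [set y | forall N r, 0 < r ->
  exists2 k, (N <= k)%N & mdist y (iter k psi x) < r].
suff AT : A = setT.
  by move=> y; have : A y by rewrite AT.
have A0 : A !=set0.
  have [y Hy] := @cluster_seq _ _ cX (fun k => iter k psi x); by exists y.
have clA : closed A.
  move=> y; rewrite closureEnbhs => Hy N r r0.
  have r2 : 0 < r / 2 by rewrite divr_gt0.
  have [w [Aw yw]] := Hy A (ball y (r / 2)) (fun _ h => h) (nbhsx_ballx y _ r2).
  have [k Nk wk] := Aw N _ r2; exists k => //.
  move: yw; rewrite ballEmdist /= => yw.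
  apply: le_lt_trans (metric_triangle _ w _) _.
  by rewrite (splitr r) ltrD.
have inv : invariant_set psi A.
  apply/seteqP; split.
    move=> _ [y Ay <-] N r r0.
    have [r' r'0 Hr'] := @cont_ball _ _ psi cpsi y r r0.
    have [k Nk Hk] := Ay N r' r'0.
    by exists k.+1; [exact: leqW | exact: Hr'].
  move=> y Ay; exists (g y); last exact: gpsi.
  move=> N r r0.
  have [r' r'0 Hr'] := @cont_ball _ _ g cg y r r0.
  have [k Nk Hk] := Ay N.+1 r' r'0.
  exists k.-1; first by rewrite -ltnS (ltn_predK Nk).
  have := Hr' _ Hk; rewrite -(ltn_predK Nk) iterS psig //.
case: (mini A clA inv) => // A00.
by move: A0; rewrite A00 => -[].
Qed.

Definition ch (R : realType) (X : metricType R) (psi : X -> X) (e : R)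
  (x : X) (k : nat) (y : X) : Prop :=
  exists p : nat -> X, [/\ p 0%N = x, p k = y &
    forall i, (i < k)%N -> mdist (psi (p i)) (p i.+1) < e].
Arguments ch {R X}.

Lemma ch_cat_pre (R : realType) (X : metricType R) (psi : X -> X) (e : R)
  (x y w : X) (a b : nat) (p1 : nat -> X) :
  p1 0%N = x -> p1 a = y ->
  (forall i, (i < a)%N -> mdist (psi (p1 i)) (p1 i.+1) < e) ->
  ch psi e y b w ->
  exists p : nat -> X, [/\ p 0%N = x, p (a + b)%N = w,
    (forall i, (i < a + b)%N -> mdist (psi (p i)) (p i.+1) < e) &
    (forall i, (i <= a)%N -> p i = p1 i)].
Proof.
move=> p10 p1a p1s [p2 [p20 p2b p2s]].
exists (fun i => if (i <= a)%N then p1 i else p2 (i - a)%N); split.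
- by rewrite leq0n.
- case: ifP => H.
    have b0 : b = 0%N by move: H; rewrite -{2}(addn0 a) leq_add2l; case: b {p2s p2b}.
    by move: p2b; rewrite b0 addn0 p1a -p20.
  by rewrite addKn.
- move=> i iab; case: (ltngtP i a) => ia /=.
  + by apply: p1s.
  + rewrite subSn ?(ltnW ia) //.
    apply: p2s; by rewrite ltn_subLR // ltnW.
  + subst i; rewrite subSn // subnn p1a -p20; apply: p2s.
    by rewrite -(ltn_add2l a) addn0.
- by move=> i ->.
Qed.

Lemma ch_cat (R : realType) (X : metricType R) (psi : X -> X) (e : R)
  (x y w : X) (a b : nat) :
  ch psi e x a y -> ch psi e y b w -> ch psi e x (a + b) w.
Proof.
move=> [p1 [h0 h1 h2]] H; have [p [q0 q1 q2 _]] := @ch_cat_pre _ _ psi e x y w a b p1 h0 h1 h2 H.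
by exists p.
Qed.

Arguments ch_cat {R X psi e x y w a b}.

Lemma ch_orbit (R : realType) (X : metricType R) (psi : X -> X) (e : R)
  (x : X) (k : nat) : 0 < e -> ch psi e x k (iter k psi x).
Proof.
move=> e0; exists (fun i => iter i psi x); split => // i _.
by rewrite iterS mdistxx.
Qed.

Lemma ch_refl (R : realType) (X : metricType R) (psi : X -> X) (e : R)
  (x : X) : ch psi e x 0 x.
Proof. by exists (fun=> x); split. Qed.

Lemma ch_reach (R : realType) (X : metricType R) (psi : X -> X) (e : R) :
  compact [set: X] -> minimal_homeo psi -> 0 < e ->
  forall x y, exists2 k, (0 < k)%N & ch psi e x k y.
Proof.
move=> cX mh e0 x y.
have [k k1 Hk] := @fwd_dense _ _ psi cX mh x y 1%N e e0.
exists k => //.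
exists (fun i => if i == k then y else iter i psi x); split.
- by case: eqP k1 => // <-.
- by rewrite eqxx.
- move=> i ik; rewrite (ltn_eqF ik).
  case: eqP => [ik1|_]; first by rewrite metric_sym -iterS ik1.
  by rewrite iterS mdistxx.
Qed.

Lemma ch_open (R : realType) (X : metricType R) (psi : X -> X) (e : R)
  (x y : X) (k : nat) : (0 < k)%N -> ch psi e x k y ->
  exists2 r, 0 < r & forall y', mdist y y' < r -> ch psi e x k y'.
Proof.
move=> k0 [p [p0 pk ps]].
have lt := ps k.-1 (ltac:(by rewrite ltn_predL)); rewrite (ltn_predK k0) pk in lt.
exists (e - mdist (psi (p k.-1)) y); first by rewrite subr_gt0.
move=> y' yy'; exists (fun i => if i == k then y' else p i); split.
- by case: eqP k0 => // <-.
- by rewrite eqxx.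
- move=> i ik; rewrite (ltn_eqF ik).
  case: eqP => [ik1|_]; last exact: ps.
  have -> : i = k.-1 by rewrite -ik1.
  apply: le_lt_trans (metric_triangle _ y _) _.
  by rewrite -ltrBrDl.
Qed.

Lemma consec (R : realType) (X : metricType R) (psi : X -> X) (e : R) :
  compact [set: X] -> connected [set: X] -> minimal_homeo psi -> 0 < e ->
  forall z, exists b, ch psi e z b z /\ ch psi e z b.+1 z.
Proof.
move=> cX conX mh e0 z.
pose Gm k := exists a b, [/\ ch psi e z a z, ch psi e z b z & (k + b)%N = a].
suff : Gm 1%N by case=> a [b [ha hb ab]]; exists b; split => //; rewrite -add1n ab.
apply: contrapT => nG1.
pose V0 := [set y | exists k, [/\ (0 < k)%N, ch psi e z k y & Gm k]].
pose V1 := [set y | exists k, [/\ (0 < k)%N, ch psi e z k y & ~ Gm k]].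
have oV : forall P : nat -> Prop,
    open [set y | exists k, [/\ (0 < k)%N, ch psi e z k y & P k]].
  move=> P; apply: open_metric => y [k [k0 hk Pk]].
  have [r r0 Hr] := @ch_open _ _ psi e z y k k0 hk.
  by exists r => // w /Hr hw; exists k; split.
have disj : forall y, V0 y -> V1 y -> False.
  move=> y [k [k0 hk [a [b [ha hb kb]]]]] [k' [k'0 hk' nk']].
  have [c _ hc] := @ch_reach _ _ psi e cX mh e0 y z.
  apply: nk'; exists ((k' + c) + a)%N, (k + c + b)%N; split.
  - exact: ch_cat (ch_cat hk' hc) ha.
  - exact: ch_cat (ch_cat hk hc) hb.
  - lia.
have cov : forall y, V0 y \/ V1 y.
  move=> y; have [k k0 hk] := @ch_reach _ _ psi e cX mh e0 z y.
  by case: (pselect (Gm k)) => [g|ng]; [left|right]; exists k; split.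
have V0T : V0 = setT.
  apply: conX.
  - have [k k0 hk] := @ch_reach _ _ psi e cX mh e0 z z.
    exists z, k; split => //; exists (k + k)%N, k; split => //.
    exact: (ch_cat hk hk).
  - by exists V0; [exact: oV | rewrite setTI].
  - exists (~` V1); first exact: open_closedC (oV _).
    rewrite setTI; apply/seteqP; split => y.
      by move=> h0 h1; exact: disj h0 h1.
    by move=> h1; case: (cov y).
have : V0 (psi z) by rewrite V0T.
move=> /disj; apply; exists 1%N; split => //.
exact: (@ch_orbit _ _ psi e z 1%N e0).
Qed.

Lemma ch_mult (R : realType) (X : metricType R) (psi : X -> X) (e : R) z c :
  ch psi e z c z -> forall x, ch psi e z (x * c) z.
Proof.
move=> hc; elim=> [|x IH]; first exact: ch_refl.
by rewrite mulSn; exact: (ch_cat hc IH).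
Qed.

Arguments ch_mult {R X psi e z c}.

Lemma ch_large (R : realType) (X : metricType R) (psi : X -> X) (e : R) z b :
  ch psi e z b z -> ch psi e z b.+1 z ->
  exists B, forall m, ch psi e z (B + m) z.
Proof.
move=> hb hb1.
have hc : ch psi e z (b + b.+1) z by exact: (ch_cat hb hb1).
have hc1 : ch psi e z (b + b.+1).+1 z by rewrite -addSn; exact: (ch_cat hb1 hb1).
set c := (b + b.+1)%N in hc hc1.
have c0 : (0 < c)%N by rewrite /c addnS.
exists (c * c)%N => m; elim/ltn_ind: m => m IH.
case: (ltnP m c) => mc.
  have -> : (c * c + m = (c - m) * c + m * c.+1)%N by nia.
  exact: (ch_cat (ch_mult hc _) (ch_mult hc1 _)).
have -> : (c * c + m = (c * c + (m - c)) + c)%N by lia.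
apply: (ch_cat (IH _ _) hc); lia.
Qed.

Lemma seg_dense (R : realType) (X : metricType R) (psi : X -> X) :
  compact [set: X] -> minimal_homeo psi -> forall z r, 0 < r ->
  exists M, forall y, exists2 i, (i <= M)%N & mdist y (iter i psi z) < r.
Proof.
move=> cX mh z r r0; apply: contrapT => H.
have H' : forall M, exists y, forall i, (i <= M)%N -> ~ (mdist y (iter i psi z) < r).
  move=> M; apply: contrapT => hM; apply: H; exists M => y.
  apply: contrapT => hy; apply: hM; exists y => i iM hi; apply: hy; by exists i.
have [u hu] := choice H'.
have [y hy] := @cluster_seq _ _ cX u.
have r2 : 0 < r / 2 by rewrite divr_gt0.
have [k _ hk] := @fwd_dense _ _ psi cX mh z y 0%N _ r2.
have [M kM hM] := hy k _ r2.
apply: (hu M k kM).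
apply: le_lt_trans (metric_triangle _ y _) _.
by rewrite (splitr r) ltrD // metric_sym.
Qed.

Theorem lemma4p4 (R : realType) (X : metricType R) (psi : X -> X) (S : set nat) :
  compact [set: X] -> connected [set: X] -> infinite_set [set: X] ->
  minimal_homeo psi ->
  infinite_set S -> (forall n, S n -> (0 < n)%N) ->
  forall eps : R, 0 < eps ->
  exists n : nat, exists x : 'I_n -> X, exists s : {perm 'I_n},
    [/\ S n, injective x,
        (forall y : X, exists i : 'I_n, mdist y (x i) < eps) &
        (forall j : 'I_n, mdist (x j) (psi (x (s j))) < eps)].
Proof.
move=> cX conX iX mh iS Spos eps eps0.
have cpsi : continuous psi by case: mh => -[g [_ _ ? _]].
have [z _] : exists z : X, True.
  apply: contrapT => nz; apply: iX.
  have -> : [set: X] = set0 by apply/seteqP; split => // x _; apply: nz; exists x.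
  exact: finite_set0.
have d0 : 0 < eps / 2 by rewrite divr_gt0.
have e80 : 0 < eps / 8 by rewrite divr_gt0.
have [M hM] := @seg_dense _ _ psi cX mh z _ d0.
have [e e0 he] := @ch_reach _ _ psi _ cX mh d0 (iter M psi z) z.
have [b [hb hb1]] := @consec _ _ psi _ cX conX mh d0 z.
have [B hB] := @ch_large _ _ psi _ z b hb hb1.
have [n [Sn nge]] : exists n, S n /\ (M + e + B <= n)%N.
  apply: contrapT => hn; apply: iS.
  apply: (@sub_finite_set _ _ `I_(M + e + B)%N); last exact: finite_II.
  move=> k Sk /=; rewrite ltnNge; apply/negP => kge; apply: hn; by exists k.
have hch := ch_cat he (hB (n - (M + e + B))%N).
have [p [p0 pn ps pM]] := @ch_cat_pre _ _ psi (eps / 2) z (iter M psi z) z M _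
  (fun i => iter i psi z) erefl erefl
  (fun i _ => ltac:(by rewrite /= ?iterS mdistxx)) hch.
have En : (M + (e + (B + (n - (M + e + B)))) = n)%N by lia.
rewrite En in pn ps.
have hr : forall i, exists r, [/\ 0 < r, r <= eps / 8 &
    forall y, mdist (p i) y < r -> mdist (psi (p i)) (psi y) < eps / 8].
  move=> i; have [r r0 Hr] := @cont_ball _ _ psi cpsi (p i) _ e80.
  exists (Num.min r (eps / 8)); split.
  - by rewrite lt_min r0 e80.
  - by rewrite ge_min lexx orbT.
  - by move=> y hy; apply: Hr; apply: lt_le_trans hy _; rewrite ge_min lexx.
have [rad hrad] := choice hr.
have rad0 : forall i, 0 < rad i by move=> i; case: (hrad i).
have [f [hf finj]] := @perturb _ _ conX iX p rad rad0 n.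
exists n, (fun i : 'I_n => f i), (perm (@ord_pred_inj n)); split => //.
- move=> i j /(finj _ _ (ltn_ord i) (ltn_ord j)); exact: val_inj.
- move=> y; have [i iM hi] := hM y.
  have iN : (i < n)%N by lia.
  exists (Ordinal iN) => /=.
  have h1 := hf i iN; have [_ h2 _] := hrad i.
  rewrite -(pM i iM) in hi.
  have := metric_triangle y (p i) (f i); lra.
- move=> j; rewrite permE.
  set i := ord_pred j.
  have ji := congr1 val (ord_predK j); rewrite /= -/i in ji.
  have pj : p j = p (val i).+1.
    have : ((val i).+1 <= n)%N by exact: ltn_ord.
    rewrite leq_eqVlt => /orP [/eqP iE|iN].
      by rewrite -ji iE modnn /= p0 pn.
    by rewrite -ji modn_small.
  have h1 := hf j (ltn_ord j); have [_ h2 _] := hrad j.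
  have h3 := hf i (ltn_ord i); have [_ h4 h5] := hrad i.
  have h6 := h5 _ h3.
  have h7 := ps i (leq_trans (ltn_ord i) (leqnn n)).
  rewrite -pj in h7.
  have t1 := metric_triangle (f j) (p j) (psi (f i)).
  have t2 := metric_triangle (p j) (psi (p i)) (psi (f i)).
  rewrite metric_sym in h1; rewrite metric_sym in h7.
  lra.
Qed.
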